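(* Let $M\subset\mathbb{CP}^n$ be a smooth hypersurface defined by a homogeneous polynomial $F$ of degree $d$. Work in the affine chart $Z_0\neq0$ with coordinates $z_i=Z_i/Z_0$, $i=1,\dots,n$, let $f(z)=F(1,z_1,\dots,z_n)$, and on an open set where $\partial f/\partial z_1\ne0$ write $M$ locally as a graph $z_1=z_1(z_2,\dots,z_n)$ with $z_1$ holomorphic in $(z_2,\dots,z_n)$; put $a_i=\partial z_1/\partial z_i$ ($2\le i\le n$), $|z|^2=\sum_{i=1}^n|z_i|^2$, $|a|^2=\sum_{i=2}^n|a_i|^2$, $F_k=\frac{\partial F}{\partial Z_k}$ evaluated at $(1,z_1,\dots,z_n)$, and $\rho=\frac{\sum_{k=0}^n|F_k|^2}{(1+|z|^2)|F_1|^2}$. The restriction of the Fubini–Study form to $M$ is $\omega=\frac{\sqrt{-1}}{2\pi}\sum_{i,j=2}^n\tilde g_{i\bar j}dz_i\wedge d\bar z_j$ with $$\tilde g_{i\bar j}=\frac{\delta_{ij}+a_i\bar a_j}{1+|z|^2}-\frac{(\bar z_i+\bar z_1a_i)(z_j+z_1\bar a_j)}{(1+|z|^2)^2}.$$ Then the inverse matrix $\tilde g^{i\bar j}$ (characterized by $\sum_{j=2}^n\tilde g_{i\bar j}\tilde g^{k\bar j}=\delta_{ik}$) is $$\tilde g^{i\bar j}=\frac1\rho\Big(\rho(1+|z|^2)\delta_{ji}-a_j\bar a_i+\bar z_jz_i(1+|a|^2)\Big)-\frac1\rho\Big(a_jz_i\big(\textstyle\sum_{k=2}^n\bar a_k\bar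 z_k-\bar z_1\big)+\bar z_j\bar a_i\big(\sum_{k=2}^na_kz_k-z_1\big)\Big).$$
   Context: The Fubini–Study form on $\mathbb{CP}^n$ is $\omega_{FS}=\frac{\sqrt{-1}}{2\pi}\partial\bar\partial\log\sum_{k=0}^n|Z_k|^2$. *)

(* Defs.v *)
From HB Require Import structures.
From mathcomp Require Import all_boot all_order all_algebra.
From mathcomp Require Import all_classical all_reals all_analysis.
From mathcomp Require Import complex.
From mathcomp Require mpoly.
Set Implicit Arguments. Unset Strict Implicit. Unset Printing Implicit Defensive.
Import Order.TTheory GRing.Theory Num.Theory.
Import numFieldNormedType.Exports.
Local Open Scope ring_scope.
Local Open Scope classical_set_scope.

(* Conventions.  n = m.+1 ; homogeneous coordinates Z_0,...,Z_n are indexed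
   by 'I_m.+2.  The affine chart Z_0 <> 0 has coordinates z_1,...,z_n.
   The local graph z_1 = phi(z_2,...,z_n) has parameters (z_2,...,z_n),
   stored as a row vector w : 'rV_m, with w 0 j = z_(j+2). *)

Notation CC R := (R[i])%C.

Definition idx1 {m : nat} : 'I_m.+2 := lift ord0 ord0.
Definition idxw {m : nat} (j : 'I_m) : 'I_m.+2 := lift ord0 (lift ord0 j).

Definition chart_pt {R : rcfType} {m : nat} (z1 : CC R) (w : 'rV[CC R]_m)
    : 'I_m.+2 -> CC R :=
  fun k => match unlift ord0 k with
           | None => 1
           | Some k' => match unlift ord0 k' with
                        | None => z1
                        | Some j => w 0 j
                        end
           end.

Definition dF {R : rcfType} {m : nat} (F : mpoly.mpoly m.+2 (CC R))
    (k : 'I_m.+2) (Z : 'I_m.+2 -> CC R) : CC R :=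
  mpoly.meval Z (mpoly.mderiv k F).

Definition smooth_hypersurface {R : rcfType} {m : nat}
    (F : mpoly.mpoly m.+2 (CC R)) : Prop :=
  forall Z : 'I_m.+2 -> CC R, (exists k, Z k != 0) ->
    mpoly.meval Z F = 0 -> exists k, dF F k Z != 0.

Definition holomorphic_on {R : realType} {m : nat}
    (U : set 'rV[(CC R)^o]_m) (phi : 'rV[(CC R)^o]_m -> (CC R)^o) : Prop :=
  forall w, U w -> differentiable phi w.

(* a_j = d z_1 / d z_(j+2) : complex partial derivative *)
Definition pder {R : realType} {m : nat}
    (phi : 'rV[(CC R)^o]_m -> (CC R)^o) (w : 'rV[(CC R)^o]_m) (j : 'I_m)
    : CC R := 'D_(delta_mx 0 j) phi w.

Definition sqn {R : rcfType} (x : CC R) : CC R := x * x^*.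

(* Main.v *)
Require Import Defs.
From HB Require Import structures.
From mathcomp Require Import all_boot all_order all_algebra.
From mathcomp Require Import all_classical all_reals all_analysis.
From mathcomp Require Import complex.
From mathcomp Require Import ring lra.
From mathcomp Require mpoly.
Import Order.TTheory GRing.Theory Num.Theory.
Import numFieldNormedType.Exports.
Local Open Scope ring_scope.
Canonical mpoly.mpoly_mderiv__canonical__Algebra_Additive.
Canonical mpoly.mpoly_mderiv__canonical__GRing_Linear.
Canonical mpoly.mpoly_meval__canonical__Algebra_Additive.
Canonical mpoly.mpoly_meval__canonical__GRing_LRMorphism.
Canonical mpoly.mpoly_meval__canonical__GRing_Linear.
Canonical mpoly.mpoly_meval__canonical__GRing_RMorphism.
Canonical mpoly.mpoly_mpoly__canonical__Algebra_AddMagma.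
Canonical mpoly.mpoly_mpoly__canonical__Algebra_AddSemigroup.
Canonical mpoly.mpoly_mpoly__canonical__Algebra_AddUMagma.
Canonical mpoly.mpoly_mpoly__canonical__Algebra_BaseAddMagma.
Canonical mpoly.mpoly_mpoly__canonical__Algebra_BaseAddUMagma.
Canonical mpoly.mpoly_mpoly__canonical__Algebra_BaseZmodule.
Canonical mpoly.mpoly_mpoly__canonical__Algebra_ChoiceBaseAddMagma.
Canonical mpoly.mpoly_mpoly__canonical__Algebra_ChoiceBaseAddUMagma.
Canonical mpoly.mpoly_mpoly__canonical__Algebra_Nmodule.
Canonical mpoly.mpoly_mpoly__canonical__Algebra_Zmodule.
Canonical mpoly.mpoly_mpoly__canonical__GRing_Algebra.
Canonical mpoly.mpoly_mpoly__canonical__GRing_ComAlgebra.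
Canonical mpoly.mpoly_mpoly__canonical__GRing_ComNzRing.
Canonical mpoly.mpoly_mpoly__canonical__GRing_ComNzSemiRing.
Canonical mpoly.mpoly_mpoly__canonical__GRing_ComPzRing.
Canonical mpoly.mpoly_mpoly__canonical__GRing_ComPzSemiRing.
Canonical mpoly.mpoly_mpoly__canonical__GRing_ComSemiAlgebra.
Canonical mpoly.mpoly_mpoly__canonical__GRing_ComUnitAlgebra.
Canonical mpoly.mpoly_mpoly__canonical__GRing_ComUnitRing.
Canonical mpoly.mpoly_mpoly__canonical__GRing_IntegralDomain.
Canonical mpoly.mpoly_mpoly__canonical__GRing_LSemiAlgebra.
Canonical mpoly.mpoly_mpoly__canonical__GRing_LSemiModule.
Canonical mpoly.mpoly_mpoly__canonical__GRing_Lalgebra.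
Canonical mpoly.mpoly_mpoly__canonical__GRing_Lmodule.
Canonical mpoly.mpoly_mpoly__canonical__GRing_NzRing.
Canonical mpoly.mpoly_mpoly__canonical__GRing_NzSemiRing.
Canonical mpoly.mpoly_mpoly__canonical__GRing_PzRing.
Canonical mpoly.mpoly_mpoly__canonical__GRing_PzSemiRing.
Canonical mpoly.mpoly_mpoly__canonical__GRing_SemiAlgebra.
Canonical mpoly.mpoly_mpoly__canonical__GRing_UnitAlgebra.
Canonical mpoly.mpoly_mpoly__canonical__GRing_UnitRing.
Canonical mpoly.mpoly_mpoly__canonical__choice_Choice.
Canonical mpoly.mpoly_mpoly__canonical__choice_SubChoice.
Canonical mpoly.mpoly_mpoly__canonical__eqtype_Equality.
Canonical mpoly.mpoly_mpoly__canonical__eqtype_SubEquality.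
Canonical mpoly.mpoly_mpoly__canonical__eqtype_SubType.
Canonical mpoly.mpoly_multinom__canonical__choice_Choice.
Canonical mpoly.mpoly_multinom__canonical__choice_Countable.
Canonical mpoly.mpoly_multinom__canonical__choice_SubChoice.
Canonical mpoly.mpoly_multinom__canonical__choice_SubCountable.
Canonical mpoly.mpoly_multinom__canonical__eqtype_Equality.
Canonical mpoly.mpoly_multinom__canonical__eqtype_SubEquality.
Canonical mpoly.mpoly_multinom__canonical__eqtype_SubType.

Section Chain.
Variables (K : numFieldType) (V : normedModType K) (n : nat).
Variables (u : 'I_n -> V -> K) (du : 'I_n -> K) (x v : V).
Hypothesis hu : forall k, is_derive x v (u k) (du k).

Definition Pd (p : mpoly.mpoly n K) : Prop :=
  is_derive x v (fun y => mpoly.meval (fun k => u k y) p)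
    (\sum_k du k * mpoly.meval (fun k => u k x) (mpoly.mderiv k p)).

Lemma Pd_C c : Pd (mpoly.mpolyC n c).
Proof.
rewrite /Pd; have -> : (fun y => mpoly.meval (fun k => u k y) (mpoly.mpolyC n c)) = cst c.
  by apply/funext => y; rewrite mpoly.mevalC.
apply: is_derive_eq; rewrite big1 // => k _.
by rewrite mpoly.mderivC mpoly.meval0 mulr0.
Qed.

Lemma Pd_D p q : Pd p -> Pd q -> Pd (p + q).
Proof.
rewrite /Pd => hp hq.
have -> : (fun y => mpoly.meval (fun k => u k y) (p + q)) =
   (fun y => mpoly.meval (fun k => u k y) p) + (fun y => mpoly.meval (fun k => u k y) q).
  by apply/funext => y; rewrite mpoly.mevalD.
apply: is_derive_eq; rewrite -big_split /=; apply: eq_bigr => k _.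
by rewrite mpoly.mderivD mpoly.mevalD mulrDr.
Qed.

Lemma Pd_M p q : Pd p -> Pd q -> Pd (p * q).
Proof.
rewrite /Pd => hp hq.
have -> : (fun y => mpoly.meval (fun k => u k y) (p * q)) =
   (fun y => mpoly.meval (fun k => u k y) p) * (fun y => mpoly.meval (fun k => u k y) q).
  by apply/funext => y; rewrite mpoly.mevalM.
apply: is_derive_eq => /=.
rewrite /GRing.scale /= !mulr_sumr -big_split /=; apply: eq_bigr => k _.
rewrite mpoly.mderivM mpoly.mevalD !mpoly.mevalM; ring.
Qed.

Lemma Pd_X i : Pd (mpoly.mpolyX K (mpoly.mnm1 i)).
Proof.
rewrite /Pd.
have -> : (fun y => mpoly.meval (fun k => u k y) (mpoly.mpolyX K (mpoly.mnm1 i))) = u i.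
  by apply/funext => y; rewrite mpoly.mevalXU.
apply: is_derive_eq; rewrite (bigD1 i) //= big1 ?addr0.
  rewrite mpoly.mderivX mpoly.mevalZ mpoly.mevalX mpoly.mnm1E eqxx mul1r.
  idtac.
  rewrite big1 ?mulr1 // => l _; by rewrite mpoly.mnmBE subnn expr0.
move=> k /negbTE ki; rewrite mpoly.mderivX mpoly.mnm1E eq_sym ki.
by rewrite scale0r mpoly.meval0 mulr0.
Qed.

Lemma Pd_all p : Pd p.
Proof.
elim/mpoly.mpolyind: p => [|c m p _ _ hp].
  by rewrite -(mpoly.mpolyC0) ; apply: Pd_C.
apply: Pd_D => //; rewrite -mpoly.mul_mpolyC; apply: Pd_M; first exact: Pd_C.
rewrite mpoly.mpolyXE_id; apply: (big_ind Pd).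
- by rewrite -mpoly.mpolyC1; apply: Pd_C.
- exact: Pd_M.
move=> i _; elim: (mpoly.fun_of_multinom m i) => [|k ih]; first by rewrite expr0 -mpoly.mpolyC1; apply: Pd_C.
by rewrite exprS; apply: Pd_M => //; apply: Pd_X.
Qed.
End Chain.

Lemma is_derive_mulc (K : numFieldType) (x v c : K) :
  is_derive x v (fun t : K => t * c) (v * c).
Proof.
have H := is_deriveM (is_derive_id x v) (is_derive_cst c x v).
have -> : (fun t : K => t * c) = ((id : K -> K) * cst c) by [].
apply: is_derive_eq; rewrite /= scaler0 add0r /GRing.scale /=; exact: mulrC.
Qed.


Lemma hom_scale (K : comNzRingType) n d (F : mpoly.mpoly n K) t Z :
  F \is mpoly.ishomog1 d (mpoly.mpoly_mdeg__canonical__mpoly_Measure n) ->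
  mpoly.meval (fun k => t * Z k) F = t ^+ d * mpoly.meval Z F.
Proof.
move=> /mpoly.dhomogP hF.
rewrite !mpoly.mevalE mulr_sumr big_seq [RHS]big_seq; apply: eq_bigr => m /hF hm.
rewrite mulrCA; congr (_ * _).
rewrite (eq_bigr (fun i => t ^+ mpoly.fun_of_multinom m i * Z i ^+ mpoly.fun_of_multinom m i)); last by move=> i _; rewrite exprMn.
rewrite big_split /= prodrXr; congr (_ ^+ _ * _).
by rewrite -hm /= mpoly.mdegE.
Qed.

Lemma euler (K : numFieldType) n d (F : mpoly.mpoly n K) (Z : 'I_n -> K) :
  F \is mpoly.ishomog1 d (mpoly.mpoly_mdeg__canonical__mpoly_Measure n) ->
  mpoly.meval Z F = 0 ->
  \sum_k Z k * mpoly.meval Z (mpoly.mderiv k F) = 0.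
Proof.
move=> hF hZ.
have H := @Pd_all K K^o n (fun k t => t * Z k) Z 1 1 (fun k => is_derive_eq (is_derive_mulc K 1 1 (Z k)) (mul1r _)) F.
rewrite /Pd in H.
have E : (fun y : K => mpoly.meval (fun k => y * Z k) F) = cst 0.
  by apply/funext => y; rewrite (@hom_scale _ _ _ _ _ _ hF) hZ mulr0.
rewrite E in H.
have := @derive_val _ _ _ _ _ _ _ H; rewrite derive_cst => E0.
rewrite [RHS]E0.
by apply: eq_bigr => k _; congr (_ * _); apply: mpoly.meval_eq => l; rewrite mul1r.
Qed.

Lemma is_derive_coord (K : numFieldType) m (w v : 'rV[K]_m) l :
  is_derive w v (fun y : 'rV[K]_m => y 0 l) (v 0 l).
Proof.
have @f : {linear 'rV[K]_m -> K}.
  by exists (fun N : 'rV[K]_m => N 0 l); do 2![eexists]; do ?[constructor];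
     rewrite ?mxE// => ? *; rewrite ?mxE//; move=> ?; rewrite !mxE.
have -> : (fun y : 'rV[K]_m => y 0 l) = f by [].
have fc : continuous f by exact: coord_continuous.
apply: DeriveDef; first exact/diff_derivable/linear_differentiable.
by rewrite deriveE ?diff_lin //; exact: linear_differentiable.
Qed.

Lemma implicit_der (R : realType) m (F : mpoly.mpoly m.+2 (CC R))
    (U : set 'rV[(CC R)^o]_m) (phi : 'rV[(CC R)^o]_m -> (CC R)^o)
    (w : 'rV[(CC R)^o]_m) (j : 'I_m) :
  open U -> holomorphic_on U phi ->
  (forall v, U v -> mpoly.meval (chart_pt (phi v) v) F = 0) -> U w ->
  pder phi w j * dF F idx1 (chart_pt (phi w) w)
  + dF F (idxw j) (chart_pt (phi w) w) = 0.
Proof.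
move=> oU hol hF Uw.
pose e : 'rV[(CC R)^o]_m := delta_mx 0 j.
pose u : 'I_m.+2 -> 'rV[(CC R)^o]_m -> (CC R)^o := fun k y => chart_pt (phi y) y k.
pose du : 'I_m.+2 -> (CC R)^o := fun k =>
  match unlift ord0 k with
  | None => 0
  | Some k' => match unlift ord0 k' with
               | None => pder phi w j
               | Some l => e 0 l end end.
have hu : forall k, is_derive w e (u k) (du k).
  move=> k; rewrite /u /du /chart_pt.
  case: (unlift ord0 k) => [k'|]; last exact: is_derive_cst.
  case: (unlift ord0 k') => [l|]; last first.
    exact/derivableP/diff_derivable/hol.
  exact: is_derive_coord.
have H := @Pd_all _ _ _ u du w e hu F.
rewrite /Pd in H.
have E : \near w, (fun y => mpoly.meval (fun k => u k y) F) w = cst 0 w.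
  have nU : nbhs w U by apply: open_nbhs_nbhs; split.
  apply: (filterS _ nU) => y Uy; exact: hF.
have := @derive_val _ _ _ _ _ _ _ H.
rewrite (near_eq_derive _ E) derive_cst => E0.
rewrite E0 big_ord_recl big_ord_recl /du /= !liftK unlift_none /= mul0r add0r.
rewrite /dF /idx1 /idxw; congr (_ + _); first by rewrite unlift_none.
rewrite (bigD1 j) //= !liftK /e mxE !eqxx mul1r big1 ?addr0 // => l /negbTE lj.
by rewrite !liftK mxE eqxx lj mul0r.
Qed.
Lemma sum_delta_l (C : comNzRingType) m (i : 'I_m) (f : 'I_m -> C) :
  \sum_j (i == j)%:R * f j = f i.
Proof.
rewrite (bigD1 i) //= eqxx mul1r big1 ?addr0 // => j /negbTE ji.
by rewrite eq_sym ji mul0r.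
Qed.

Lemma sum_delta_r (C : comNzRingType) m (k : 'I_m) (f : 'I_m -> C) :
  \sum_j (j == k)%:R * f j = f k.
Proof.
rewrite (bigD1 k) //= eqxx mul1r big1 ?addr0 // => j /negbTE ji.
by rewrite ji mul0r.
Qed.

Lemma alg (C : numClosedFieldType) m (a zz : 'I_m -> C) (z1 rho : C) (i k : 'I_m) :
  let nz : C := z1 * z1^* + \sum_(j < m) zz j * (zz j)^* in
  let na : C := \sum_(j < m) a j * (a j)^* in
  rho = (1 + na + (z1 - \sum_(j < m) a j * zz j) * (z1 - \sum_(j < m) a j * zz j)^*) / (1 + nz) ->
  let g : 'I_m -> 'I_m -> C := fun i j =>
    ((i == j)%:R + a i * (a j)^*) / (1 + nz)
    - ((zz i)^* + z1^* * a i) * (zz j + z1 * (a j)^*) / (1 + nz) ^+ 2 in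
  let ginv : 'I_m -> 'I_m -> C := fun i j =>
    rho^-1 * (rho * (1 + nz) * (j == i)%:R - a j * (a i)^*
              + (zz j)^* * zz i * (1 + na))
    - rho^-1 * (a j * zz i * (\sum_(k < m) (a k)^* * (zz k)^* - z1^*)
                + (zz j)^* * (a i)^* * (\sum_(k < m) a k * zz k - z1)) in
  \sum_(j < m) g i j * ginv k j = (i == k)%:R.
Proof.
move=> nz na hrho g ginv.
have nz0 : 0 <= nz.
  by apply: addr_ge0; [exact: mul_conjC_ge0 | apply: sumr_ge0 => j _; exact: mul_conjC_ge0].
have na0 : 0 <= na by apply: sumr_ge0 => j _; exact: mul_conjC_ge0.
have A0 : 1 + nz != 0 by rewrite gt_eqF // ltr_wpDr // ltr01.
pose S := \sum_(j < m) a j * zz j.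
pose Sb := \sum_(j < m) (a j)^* * (zz j)^*.
pose N := \sum_(j < m) zz j * (zz j)^*.
have SbE : S^* = Sb by rewrite /S rmorph_sum; apply: eq_bigr => j _; rewrite rmorphM.
have P0 : 1 + na + (z1 - S) * (z1 - S)^* != 0.
  by rewrite gt_eqF // ltr_wpDr ?mul_conjC_ge0 // ltr_wpDr // ltr01.
have rho0 : rho != 0 by rewrite hrho mulf_neq0 // invr_eq0.
pose c0 := (1 + nz)^-1.
pose c1 := a i / (1 + nz) - ((zz i)^* + z1^* * a i) * z1 / (1 + nz) ^+ 2.
pose c2 := - ((zz i)^* + z1^* * a i) / (1 + nz) ^+ 2.
pose d0 := rho^-1 * rho * (1 + nz).
pose d1 := rho^-1 * (- (a k)^* - zz k * (Sb - z1^*)).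
pose d2 := rho^-1 * (zz k * (1 + na) - (a k)^* * (S - z1)).
have E : forall j, g i j * ginv k j =
   (i == j)%:R * (c0 * d0 * (j == k)%:R + c0 * d1 * a j + c0 * d2 * (zz j)^*)
 + (j == k)%:R * (((a j)^* * c1 + zz j * c2) * d0)
 + (a j * (a j)^*) * (c1 * d1) + ((a j)^* * (zz j)^*) * (c1 * d2)
 + (a j * zz j) * (c2 * d1) + (zz j * (zz j)^*) * (c2 * d2).
  move=> j; rewrite /g /ginv /c0 /c1 /c2 /d0 /d1 /d2 -/S -/Sb.
  have dd : (i == j)%:R * (j == k)%:R = (i == j)%:R * (i == k)%:R :> C.
    by case: eqP => [->|]; rewrite ?mul0r.
  by field; rewrite A0 rho0.
rewrite (eq_bigr _ (fun j _ => E j)) !big_split /= sum_delta_l sum_delta_r.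
rewrite -!mulr_suml -/na -/Sb -/S -/N.
have hr : rho = (1 + na + (z1 - S) * (z1^* - Sb)) / (1 + (z1 * z1^* + N)).
  by rewrite hrho -/S -SbE -rmorphB.
have P1 : 1 + na + (z1 - S) * (z1^* - Sb) != 0 by rewrite -SbE -rmorphB.
have A1 : 1 + (z1 * z1^* + N) != 0 by [].
rewrite /c0 /c1 /c2 /d0 /d1 /d2 /nz -/N hr.
field.
by rewrite A1 P1.
Qed.

Lemma chart0 (R : rcfType) m (z1 : CC R) (w : 'rV[CC R]_m) : chart_pt z1 w ord0 = 1.
Proof. by rewrite /chart_pt unlift_none. Qed.
Lemma chart1 (R : rcfType) m (z1 : CC R) (w : 'rV[CC R]_m) : chart_pt z1 w (lift ord0 ord0) = z1.
Proof. by rewrite /chart_pt liftK unlift_none. Qed.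
Lemma chartw (R : rcfType) m (z1 : CC R) (w : 'rV[CC R]_m) l :
  chart_pt z1 w (lift ord0 (lift ord0 l)) = w 0 l.
Proof. by rewrite /chart_pt !liftK. Qed.

Lemma sqnM (R : rcfType) (x y : CC R) : sqn (x * y) = sqn x * sqn y.
Proof. by rewrite /sqn rmorphM /=; ring. Qed.
Lemma sqnN (R : rcfType) (x : CC R) : sqn (- x) = sqn x.
Proof. by rewrite /sqn rmorphN /=; ring. Qed.

Theorem lemma2p1 (R : realType) (m d : nat)
    (F : mpoly.mpoly m.+2 (CC R))
    (U : set 'rV[(CC R)^o]_m) (phi : 'rV[(CC R)^o]_m -> (CC R)^o)
    (w : 'rV[(CC R)^o]_m) :
  F \is mpoly.ishomog1 d (mpoly.mpoly_mdeg__canonical__mpoly_Measure m.+2) ->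
  smooth_hypersurface F ->
  open U ->
  holomorphic_on U phi ->
  (forall v, U v -> mpoly.meval (chart_pt (phi v) v) F = 0) ->
  (forall v, U v -> dF F idx1 (chart_pt (phi v) v) != 0) ->
  U w ->
  let z1 : CC R := phi w in
  let zz : 'I_m -> CC R := fun j => w 0 j in
  let a : 'I_m -> CC R := pder phi w in
  let Z := chart_pt z1 w in
  let nz : CC R := sqn z1 + \sum_(j < m) sqn (zz j) in
  let na : CC R := \sum_(j < m) sqn (a j) in
  let rho : CC R :=
    (\sum_(k < m.+2) sqn (dF F k Z)) / ((1 + nz) * sqn (dF F idx1 Z)) in
  let g : 'I_m -> 'I_m -> CC R := fun i j =>
    ((i == j)%:R + a i * (a j)^*) / (1 + nz)
    - ((zz i)^* + z1^* * a i) * (zz j + z1 * (a j)^*) / (1 + nz) ^+ 2 in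
  let ginv : 'I_m -> 'I_m -> CC R := fun i j =>
    rho^-1 * (rho * (1 + nz) * (j == i)%:R - a j * (a i)^*
              + (zz j)^* * zz i * (1 + na))
    - rho^-1 * (a j * zz i * (\sum_(k < m) (a k)^* * (zz k)^* - z1^*)
                + (zz j)^* * (a i)^* * (\sum_(k < m) a k * zz k - z1)) in
  forall i k : 'I_m, \sum_(j < m) g i j * ginv k j = (i == k)%:R.
Proof.
move=> hom _ oU hol hF hF1 Uw z1 zz a Z nz na rho g ginv i k.
pose f1 := dF F idx1 Z.
pose F0 := dF F ord0 Z.
pose S := \sum_(j < m) a j * zz j.
have f10 : f1 != 0 by exact: hF1.
have hFw : forall l, dF F (idxw l) Z = - (a l * f1).
  move=> l; apply/eqP; rewrite -addr_eq0 addrC; apply/eqP; exact: (@implicit_der _ _ _ _ _ _ l oU hol hF Uw).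
have EE := @euler _ _ _ _ _ hom (hF w Uw).
rewrite 2!big_ord_recl in EE.
have EE' : F0 + z1 * f1 + \sum_l zz l * dF F (idxw l) Z = 0.
  rewrite -[RHS]EE /Z chart0 chart1 mul1r addrA; congr (_ + _ + _).

  by apply: eq_bigr => l _; rewrite chartw.
have Hsum : \sum_l zz l * dF F (idxw l) Z = - (f1 * S).
  rewrite /S mulr_sumr -sumrN; apply: eq_bigr => l _; rewrite hFw; ring.
have hF0 : F0 = - (f1 * (z1 - S)).
  have -> : F0 = F0 + z1 * f1 + - (f1 * S) - z1 * f1 + f1 * S by ring.
  rewrite -Hsum EE'; ring.
have num : \sum_(k < m.+2) sqn (dF F k Z) = sqn f1 * (1 + na + sqn (z1 - S)).
  rewrite 2!big_ord_recl -/F0 -/f1.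
  rewrite (eq_bigr (fun l => sqn f1 * sqn (a l))); last first.
    by move=> l _; rewrite hFw sqnN sqnM mulrC.
  rewrite -mulr_sumr hF0 sqnN sqnM /na; ring.
have A0 : 1 + nz != 0.
  rewrite gt_eqF // ltr_wpDr ?ltr01 // addr_ge0 ?mul_conjC_ge0 //.
  by apply: sumr_ge0 => j _; exact: mul_conjC_ge0.
have s0 : sqn f1 != 0 by rewrite /sqn mulf_neq0 // conjC_eq0.
have hrho : rho = (1 + na + sqn (z1 - S)) / (1 + nz).
  by rewrite /rho num -/f1; field; rewrite A0 s0.
have H := @alg _ m a zz z1 rho i k hrho.
exact H.
Qed.
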